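(* Consider the stochastic MPC scheme described in the context, with i.i.d. zero-mean disturbances $w(k)$, $\mathbb{E}(w(k))=0$, $\mathrm{var}(w(k))=\Sigma^w$ for all $0\le k\le\bar N$, quadratic costs $l_k(x,u)=\|x\|_Q^2+\|u\|_R^2$ for all $k$ and $l_f(x)=\|x\|_P^2$ with $Q\succeq0$, $R\succ0$, and $P$ the solution of the Lyapunov equation $(A+BK)^\top P(A+BK)-P=-(Q+K^\top RK)$. Let $J^*(x,z)$ denote the optimal cost of problem $(\mathcal{P}_k)$ with initial measured state $x_0=x$ and nominal initial state $z_0=z$. Then, under the control law $u(k)=Ke_0(k)+v_0^*(k)$, $$\mathbb{E}\big(J^*(x(k+1),z(k+1))-J^*(x(k),z(k))\,\big|\,x(k),z(k)\big)\le-\|x(k)\|_Q^2-\|u(k)\|_R^2+\mathrm{tr}(P\Sigma^w).$$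
   Context: $\|x\|_P=\sqrt{x^\top Px}$. System: $x(k+1)=Ax(k)+Bu(k)+w(k)$, $x\in\mathbb{R}^{n_x}$, $u\in\mathbb{R}^{n_u}$, finite horizon $\bar N$. $\mathcal{X},\mathcal{U}$ convex sets; $\mathcal{A}\ominus\mathcal{B}=\{a\in\mathcal{A}: a+b\in\mathcal{A}\ \forall b\in\mathcal{B}\}$. A fixed stabilizing gain $K\in\mathbb{R}^{n_u\times n_x}$ is given; $\mathcal{R}^x_k,\mathcal{R}^u_k$ ($0\le k\le\bar N$) are given tightening sets; $\mathcal{R}_f$ is a set with $\mathcal{R}_f\supseteq\bigcup_k\mathcal{R}^x_k$, $K\mathcal{R}_f\supseteq\bigcup_k\mathcal{R}^u_k$, and the terminal set $\mathcal{Z}_f$ satisfies $\mathcal{Z}_f\subseteq\mathcal{X}\ominus\mathcal{R}_f$, $(A+BK)\mathcal{Z}_f\subseteq\mathcal{Z}_f$, $K\mathcal{Z}_f\subseteq\mathcal{U}\ominus K\mathcal{R}_f$. Problem $(\mathcal{P}_k)$ at time $k$: minimize over $v_0,\dots,v_{N-1}$ the cost $\mathbb{E}_{W_k}\big(l_f(x_N)+\sum_{i=0}^{N-1}l_{k+i}(x_i,u_i)\big)$ subject to $x_i=z_i+e_i$, $u_i=Ke_i+v_i$, $z_{i+1}=Az_i+Bv_i$, $e_{i+1}=(A+BK)e_i+w_i$, where $W_k=[w_0^\top,\dots,w_N^\top]^\top$ has the conditional distribution of $[w(k)^\top,\dots,w(k+N)^\top]^\top$ given the realized $w(0),\dots,w(k-1)$;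 constraints $z_i\in\mathcal{X}\ominus\mathcal{R}^x_{i+k}$, $v_i\in\mathcal{U}\ominus\mathcal{R}^u_{i+k}$ ($i=0,\dots,N-1$), $z_N\in\mathcal{Z}_f$; initialization $x_0=x(k)$, $z_0=z_1(k-1)$ (with $z_0(0)=x(0)$), $e_0=x_0-z_0$. Closed-loop nominal state $z(k)=z_0(k)$; applied input $u(k)=Ke_0(k)+v_0^*(k)$ with $v^*(k)$ optimal for $(\mathcal{P}_k)$. *)

(* Defs.v *)
From HB Require Import structures.
From mathcomp Require Import all_boot all_order all_algebra.
From mathcomp Require Import all_classical all_reals all_analysis.
Set Implicit Arguments. Unset Strict Implicit. Unset Printing Implicit Defensive.
Import Order.TTheory GRing.Theory Num.Theory.
Import numFieldNormedType.Exports.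
Local Open Scope classical_set_scope.
Local Open Scope ring_scope.

Section Defs.
Variable R : realType.

Definition qf n (P : 'M[R]_n) (x : 'cV[R]_n) : R := ((x^T *m P *m x) 0 0).

Definition psd n (Q : 'M[R]_n) : Prop := Q^T = Q /\ forall x, 0 <= qf Q x.
Definition pd n (Q : 'M[R]_n) : Prop := Q^T = Q /\ forall x, x != 0 -> 0 < qf Q x.

Definition schur_stable n (Phi : 'M[R]_n) : Prop :=
  forall i j, ((fun t : nat => (Phi ^+ t) i j) : R^nat) @ \oo --> (0 : R).

Definition pdiff n (A B : set 'cV[R]_n) : set 'cV[R]_n :=
  [set a | A a /\ forall b, B b -> A (a + b)].

Definition mximg m n (K : 'M[R]_(m, n)) (S : set 'cV[R]_n) : set 'cV[R]_m :=
  (fun z => K *m z) @` S.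

Definition vec_measurable n : set (set 'cV[R]_n) :=
  <<s [set C : set 'cV[R]_n | exists (i : 'I_n) (B : set R), measurable B /\
                 C = [set v : 'cV[R]_n | B (v i 0)]] >>.

Section Prob.
Context (d : measure_display) (T : measurableType d).

Definition sigma_of n (Y : T -> 'cV[R]_n) : set (set T) :=
  <<s [set A : set T | exists (i : 'I_n) (B : set R), measurable B /\
                 A = [set w | B (Y w i 0)]] >>.

Definition rand_vec n (Y : T -> 'cV[R]_n) : Prop :=
  forall i, measurable_fun setT (fun w => Y w i 0).

Definition mutually_independent (P : probability T R) n
    (W : nat -> T -> 'cV[R]_n) : Prop :=
  forall (s : seq nat) (A : nat -> set T), uniq s ->
    (forall j, j \in s -> sigma_of (W j) (A j)) ->
    P (\big[setI/setT]_(j <- s) A j) = (\prod_(j <- s) P (A j))%E.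

Definition identically_distributed (P : probability T R) n
    (W : nat -> T -> 'cV[R]_n) : Prop :=
  forall j (C : set 'cV[R]_n), vec_measurable C ->
    P (W j @^-1` C) = P (W 0%N @^-1` C).

Definition mean0_cov (P : probability T R) n (W : nat -> T -> 'cV[R]_n)
    (Sigma : 'M[R]_n) : Prop :=
  forall k, (forall i, P.-integrable setT (fun w => (W k w i 0)%:E) /\
                       P.-integrable setT (fun w => ((W k w i 0) ^+ 2)%:E) /\
                       (\int[P]_w (W k w i 0)%:E = 0)%E) /\
            (forall i j, (\int[P]_w ((W k w i 0) * (W k w j 0))%:E = (Sigma i j)%:E)%E).

Variables (nx nu : nat) (A : 'M[R]_nx) (B : 'M[R]_(nx, nu)) (K : 'M[R]_(nu, nx)).
Variables (Q P : 'M[R]_nx) (Rw : 'M[R]_nu) (N : nat).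
Variables (W : nat -> T -> 'cV[R]_nx) (Pr : probability T R).

Fixpoint znom (z0 : 'cV[R]_nx) (v : nat -> 'cV[R]_nu) (i : nat) : 'cV[R]_nx :=
  match i with
  | 0 => z0
  | i'.+1 => A *m znom z0 v i' + B *m v i'
  end.

(* error prediction e_i at time k, disturbances w_i = W (k+i) *)
Fixpoint epred (k : nat) (e0 : 'cV[R]_nx) (w : T) (i : nat) : 'cV[R]_nx :=
  match i with
  | 0 => e0
  | i'.+1 => (A + B *m K) *m epred k e0 w i' + W (k + i') w
  end.

Definition sample_cost k (x z : 'cV[R]_nx) (v : nat -> 'cV[R]_nu) (w : T) : R :=
  let e := epred k (x - z) w in
  let xi i := znom z v i + e i in
  let ui i := K *m e i + v i in
  qf P (xi N) + \sum_(i < N) (qf Q (xi i) + qf Rw (ui i)).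

Definition Jcost k (x z : 'cV[R]_nx) (v : nat -> 'cV[R]_nu) : \bar R :=
  (\int[Pr]_w (sample_cost k x z v w)%:E)%E.

Variables (X : set 'cV[R]_nx) (U : set 'cV[R]_nu)
          (Rx : nat -> set 'cV[R]_nx) (Ru : nat -> set 'cV[R]_nu)
          (Zf : set 'cV[R]_nx).

Definition feasible k (z : 'cV[R]_nx) (v : nat -> 'cV[R]_nu) : Prop :=
  (forall i, (i < N)%N ->
     pdiff X (Rx (i + k)) (znom z v i) /\ pdiff U (Ru (i + k)) (v i)) /\
  Zf (znom z v N).

(* optimal cost J*_k(x, z) (+oo if infeasible) *)
Definition Jstar k (x z : 'cV[R]_nx) : \bar R :=
  ereal_inf [set Jcost k x z v | v in feasible k z].

End Prob.
End Defs.

(* Main.v *)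
Require Import Defs.
From HB Require Import structures.
From mathcomp Require Import all_boot all_order all_algebra.
From mathcomp Require Import all_classical all_reals all_analysis.
From mathcomp Require Import measurable_realfun.
From mathcomp Require Import ring lra.
Set Implicit Arguments. Unset Strict Implicit. Unset Printing Implicit Defensive.
Import Order.TTheory GRing.Theory Num.Theory.
Import numFieldNormedType.Exports.
Local Open Scope classical_set_scope.
Local Open Scope ring_scope.
Section Indep.
Context (R : realType) d (T : measurableType d) (Pr : probability T R).
Variables (X Y : T -> R).
Hypotheses (mX : measurable_fun setT X) (mY : measurable_fun setT Y).
Hypothesis XY1 : (X \* Y) \in Lfun Pr 1.
Hypothesis Y1 : Y \in Lfun Pr 1.
Hypothesis EY : ('E_Pr[Y] = 0)%E.
Hypothesis indep : forall B1 B2, measurable B1 -> measurable B2 ->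
  Pr (X @^-1` B1 `&` Y @^-1` B2) = (Pr (X @^-1` B1) * Pr (Y @^-1` B2))%E.
Let XR : {RV Pr >-> R} := MeasurableFun.Pack (MeasurableFun.Class (isMeasurableFun.Build _ _ _ _ _ mX)).
Let YR : {RV Pr >-> R} := MeasurableFun.Pack (MeasurableFun.Class (isMeasurableFun.Build _ _ _ _ _ mY)).
Let phi := fun w => (X w, Y w).
Let mphi : measurable_fun setT phi.
Proof. exact: measurable_fun_pair. Qed.
Let PH : {RV Pr >-> (R * R)%type} := MeasurableFun.Pack (MeasurableFun.Class (isMeasurableFun.Build _ _ _ _ _ mphi)).
Let mu := distribution Pr PH.
Let nu := (distribution Pr XR \x distribution Pr YR)%E.
Let numu A : measurable A -> nu A = mu A.
Proof.
apply: product_measure_unique => B1 B2 mB1 mB2.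
rewrite /mu /distribution /pushforward /= -indep //.
Qed.
Let f := fun p : R * R => (p.1 * p.2)%:E.
Let mf : measurable_fun setT f.
Proof. by apply/measurable_EFinP; apply: measurable_funM. Qed.
Let If : Pr.-integrable setT (f \o PH).
Proof. by move/Lfun1_integrable: XY1. Qed.
Let Inu : (distribution Pr XR \x distribution Pr YR)%E.-integrable setT f.
Proof.
apply/integrableP; split => //.
rewrite (eq_measure_integral mu); last by move=> A mA _; first [exact: numu | symmetry; exact: numu].
rewrite ge0_integral_distribution //; last by apply: measurableT_comp.
by move/integrableP: If => [].
Qed.

Lemma indep_mul0 : ('E_Pr[X \* Y] = 0)%E.
Proof.
rewrite unlock.
have -> : (\int[Pr]_w ((X \* Y) w)%:E = \int[Pr]_w (f \o PH) w)%E by [].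
rewrite -integral_distribution //.
rewrite (eq_measure_integral nu); last by move=> A mA _; first [exact: numu | symmetry; exact: numu].
rewrite -(integral12_prod_meas1 Inu).
have HY : (\int[distribution Pr YR]_y (y%:E) = 0)%E.
  rewrite integral_distribution //; last by move/Lfun1_integrable: Y1.
  by move: EY; rewrite unlock.
have IY : (distribution Pr YR).-integrable setT (fun y : R => y%:E).
  apply: integrable_pushforward => //; first exact/measurable_EFinP. by move/Lfun1_integrable: Y1.
rewrite -[RHS](integral0 (distribution Pr XR) setT).
apply: eq_integral => x _.
rewrite /fubini_F /f /=.
under eq_integral do rewrite EFinM.
rewrite integralZl //.
by rewrite HY mule0.
Qed.
End Indep.
Section S.
Context (R : realType) d (T : measurableType d) (mu : {measure set T -> \bar R}).
Local Open Scope ereal_scope.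
Lemma integral_le_any (f g : T -> \bar R) : (forall x, f x <= g x) ->
  \int[mu]_x f x <= \int[mu]_x g x.
Proof.
move=> fg; rewrite /integral.
apply: leeB; apply: le_ereal_sup => _ [h hf <-]; exists h => //= x;
  apply: (le_trans (hf x)); rewrite ?funeposE ?funenegE /patch /= ?in_setT /=.
- by apply: le_max2 => //.
- by apply: le_max2 => //; rewrite leeN2.
Qed.
End S.
Section Mom.
Context (R : realType) d (T : measurableType d) (Pr : probability T R).
Local Notation L2 := (Lfun Pr 2%:E).
Local Notation L1 := (Lfun Pr 1).

Definition Ex (f : T -> R) : R := fine ('E_Pr[f])%E.

Lemma L2_L1 f : f \in L2 -> f \in L1.
Proof. by apply: Lfun_subset12; rewrite fin_num_measure. Qed.

Lemma EEx f : f \in L1 -> ('E_Pr[f] = (Ex f)%:E)%E.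
Proof. by move=> f1; rewrite /Ex fineK // expectation_fin_num. Qed.

Lemma L1D f g : f \in L1 -> g \in L1 -> (fun w => f w + g w) \in L1.
Proof. move=> f1 g1; exact: ((Lfun_addr_closed Pr (lexx 1%E)).2 _ _ f1 g1). Qed.

Lemma L2D f g : f \in L2 -> g \in L2 -> (fun w => f w + g w) \in L2.
Proof. move=> f1 g1; exact: ((Lfun_addr_closed Pr (lee1n 2)).2 _ _ f1 g1). Qed.

Lemma L1Z k f : f \in L1 -> (fun w => k * f w) \in L1.
Proof.
move=> f1; have H := @Lfun_scale _ _ _ Pr f k 1 (lexx _) f1.
suff -> : (fun w => k * f w) = k \o* f by [].
apply/funext => w /=. by rewrite mulrC.
Qed.

Lemma L2Z k f : f \in L2 -> (fun w => k * f w) \in L2.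
Proof.
move=> f1; have H := @Lfun_scale _ _ _ Pr f k 2 (ler1n _ _) f1.
suff -> : (fun w => k * f w) = k \o* f by [].
apply/funext => w /=. by rewrite mulrC.
Qed.

Lemma L1cst c : (fun _ : T => c) \in L1.
Proof. exact: Lfun_cst. Qed.

Lemma L2cst c : (fun _ : T => c) \in L2.
Proof. exact: Lfun_cst. Qed.

Lemma L2M f g : f \in L2 -> g \in L2 -> (fun w => f w * g w) \in L1.
Proof. exact: Lfun2_mul_Lfun1. Qed.

Lemma L1_sum (I : Type) (r : seq I) (F : I -> T -> R) :
  (forall i, F i \in L1) -> (fun w => \sum_(i <- r) F i w) \in L1.
Proof.
move=> HF; elim: r => [|i r IH].
  by under eq_fun do rewrite big_nil; exact: L1cst.
under eq_fun do rewrite big_cons; exact: L1D.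
Qed.

Lemma L2_sum (I : Type) (r : seq I) (F : I -> T -> R) :
  (forall i, F i \in L2) -> (fun w => \sum_(i <- r) F i w) \in L2.
Proof.
move=> HF; elim: r => [|i r IH].
  by under eq_fun do rewrite big_nil; exact: L2cst.
under eq_fun do rewrite big_cons; exact: L2D.
Qed.

Lemma ExD f g : f \in L1 -> g \in L1 -> Ex (fun w => f w + g w) = Ex f + Ex g.
Proof.
move=> f1 g1; apply: EFin_inj; rewrite EFinD -!EEx //; last exact: L1D.
exact: expectationD.
Qed.

Lemma ExZ k f : f \in L1 -> Ex (fun w => k * f w) = k * Ex f.
Proof.
move=> f1; apply: EFin_inj; rewrite EFinM -!EEx //; last exact: L1Z.
rewrite -expectationZl //; congr ('E_Pr[_])%E; apply/funext => w /=; by rewrite mulrC.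
Qed.

Lemma Ex_cst c : Ex (fun _ => c) = c.
Proof. by rewrite /Ex (expectation_cst Pr c). Qed.

Lemma Ex_sum (I : Type) (r : seq I) (F : I -> T -> R) :
  (forall i, F i \in L1) -> Ex (fun w => \sum_(i <- r) F i w) = \sum_(i <- r) Ex (F i).
Proof.
move=> HF; elim: r => [|i r IH].
  by under eq_fun do rewrite big_nil; rewrite Ex_cst big_nil.
under eq_fun do rewrite big_cons; rewrite ExD ?big_cons ?IH //; exact: L1_sum.
Qed.

Lemma Ex_ext f g : f =1 g -> Ex f = Ex g.
Proof. by move=> /funext ->. Qed.

Lemma L2_ext f g : f =1 g -> f \in L2 -> g \in L2.
Proof. by move=> /funext ->. Qed.
Lemma L1_ext f g : f =1 g -> f \in L1 -> g \in L1.
Proof. by move=> /funext ->. Qed.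

End Mom.
Arguments Ex_ext {R d T Pr} f g.
Arguments L2_ext {R d T Pr} f g.
Arguments L1_ext {R d T Pr} f g.
Section Vec.
Context (R : realType) d (T : measurableType d) (Pr : probability T R).
Local Notation L2 := (Lfun Pr 2%:E).
Local Notation L1 := (Lfun Pr 1).
Local Notation Ex := (Ex Pr).

Definition good m (V : T -> 'cV[R]_m) := forall a, (fun w => V w a 0) \in L2.
Definition mean m (V : T -> 'cV[R]_m) : 'cV[R]_m := \col_a Ex (fun w => V w a 0).
Definition cross m n (V1 : T -> 'cV[R]_m) (V2 : T -> 'cV[R]_n) : 'M[R]_(m, n) :=
  \matrix_(a, b) Ex (fun w => V1 w a 0 * V2 w b 0).
Definition tf m (S M : 'M[R]_m) := \tr (S *m M^T).

Lemma good_cst m (c : 'cV[R]_m) : good (fun _ => c).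
Proof. move=> a; exact: L2cst. Qed.

Lemma goodD m (V1 V2 : T -> 'cV[R]_m) : good V1 -> good V2 -> good (fun w => V1 w + V2 w).
Proof.
move=> g1 g2 a; apply: (L2_ext _ _ _ (L2D (g1 a) (g2 a))) => w; by rewrite mxE.
Qed.

Lemma goodM m n (L : 'M[R]_(n, m)) (V : T -> 'cV[R]_m) : good V -> good (fun w => L *m V w).
Proof.
move=> g a; apply: (L2_ext (fun w => \sum_(c <- index_enum 'I_m) L a c * V w c 0)).
  by move=> w; rewrite mxE.
by apply: L2_sum => c; apply: L2Z.
Qed.

Lemma mean_cst m (c : 'cV[R]_m) : mean (fun _ => c) = c.
Proof. by apply/matrixP => a b; rewrite mxE Ex_cst (ord1 b). Qed.

Lemma meanD m (V1 V2 : T -> 'cV[R]_m) : good V1 -> good V2 ->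
  mean (fun w => V1 w + V2 w) = mean V1 + mean V2.
Proof.
move=> g1 g2; apply/matrixP => a b; rewrite !mxE.
rewrite (Ex_ext _ (fun w => V1 w a 0 + V2 w a 0)); last by move=> w; rewrite mxE.
by rewrite ExD //; apply: L2_L1.
Qed.

Lemma meanM m n (L : 'M[R]_(n, m)) (V : T -> 'cV[R]_m) : good V ->
  mean (fun w => L *m V w) = L *m mean V.
Proof.
move=> g; apply/matrixP => a b; rewrite !mxE.
rewrite (Ex_ext _ (fun w => \sum_(c <- index_enum 'I_m) L a c * V w c 0)); last by move=> w; rewrite mxE.
rewrite Ex_sum; last by move=> c; apply: L1Z; apply: L2_L1.
apply: eq_bigr => c _; rewrite ExZ ?mxE //; exact: L2_L1.
Qed.

Lemma cross_L1 m n (V1 : T -> 'cV[R]_m) (V2 : T -> 'cV[R]_n) a b :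
  good V1 -> good V2 -> (fun w => V1 w a 0 * V2 w b 0) \in L1.
Proof. by move=> g1 g2; apply: L2M. Qed.

Lemma crossC m n (V1 : T -> 'cV[R]_m) (V2 : T -> 'cV[R]_n) :
  cross V2 V1 = (cross V1 V2)^T.
Proof. apply/matrixP => a b; rewrite !mxE; apply: Ex_ext => w; exact: mulrC. Qed.

Lemma crossDl m n (V1 V2 : T -> 'cV[R]_m) (V3 : T -> 'cV[R]_n) :
  good V1 -> good V2 -> good V3 ->
  cross (fun w => V1 w + V2 w) V3 = cross V1 V3 + cross V2 V3.
Proof.
move=> g1 g2 g3; apply/matrixP => a b; rewrite !mxE.
rewrite (Ex_ext _ (fun w => V1 w a 0 * V3 w b 0 + V2 w a 0 * V3 w b 0)).
  by rewrite ExD //; apply: cross_L1.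
by move=> w; rewrite mxE mulrDl.
Qed.

Lemma crossMl m n p (L : 'M[R]_(p, m)) (V1 : T -> 'cV[R]_m) (V2 : T -> 'cV[R]_n) :
  good V1 -> good V2 ->
  cross (fun w => L *m V1 w) V2 = L *m cross V1 V2.
Proof.
move=> g1 g2; apply/matrixP => a b; rewrite !mxE.
rewrite (Ex_ext _ (fun w => \sum_(c <- index_enum 'I_m) L a c * (V1 w c 0 * V2 w b 0))).
  rewrite Ex_sum; last by move=> c; apply: L1Z; apply: cross_L1.
  apply: eq_bigr => c _; rewrite ExZ ?mxE //; exact: cross_L1.
by move=> w; rewrite mxE mulr_suml; apply: eq_bigr => c _; rewrite mulrA.
Qed.

Lemma crossDr m n (V1 : T -> 'cV[R]_m) (V2 V3 : T -> 'cV[R]_n) :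
  good V1 -> good V2 -> good V3 ->
  cross V1 (fun w => V2 w + V3 w) = cross V1 V2 + cross V1 V3.
Proof.
move=> g1 g2 g3; apply/matrixP => a b; rewrite !mxE.
rewrite (Ex_ext _ (fun w => V1 w a 0 * V2 w b 0 + V1 w a 0 * V3 w b 0)).
  by rewrite ExD //; apply: cross_L1.
by move=> w; rewrite mxE mulrDr.
Qed.

Lemma crossMr m n p (L : 'M[R]_(p, n)) (V1 : T -> 'cV[R]_m) (V2 : T -> 'cV[R]_n) :
  good V1 -> good V2 ->
  cross V1 (fun w => L *m V2 w) = cross V1 V2 *m L^T.
Proof.
move=> g1 g2; rewrite crossC crossMl // trmx_mul; congr (_ *m _).
by rewrite crossC trmxK.
Qed.

Lemma cross_cstl m n (c : 'cV[R]_m) (V : T -> 'cV[R]_n) : good V ->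
  cross (fun _ => c) V = c *m (mean V)^T.
Proof.
move=> g; apply/matrixP => a b; rewrite !mxE big_ord1 !mxE.
by rewrite ExZ //; apply: L2_L1.
Qed.

Lemma cross_cstr m n (V : T -> 'cV[R]_m) (c : 'cV[R]_n) : good V ->
  cross V (fun _ => c) = mean V *m c^T.
Proof.
by move=> g; rewrite crossC cross_cstl // trmx_mul trmxK.
Qed.

Lemma qfE m (S : 'M[R]_m) (v : 'cV[R]_m) :
  qf S v = \sum_a \sum_b S a b * (v a 0 * v b 0).
Proof.
rewrite /qf mxE exchange_big /=; apply: eq_bigr => b _.
rewrite mxE mulr_suml; apply: eq_bigr => a _; rewrite mxE.
by rewrite mulrCA mulrA [v a 0 * _]mulrC -!mulrA.
Qed.

Lemma tfE m (S M : 'M[R]_m) : tf S M = \sum_a \sum_b S a b * M a b.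
Proof.
rewrite /tf /mxtrace; apply: eq_bigr => a _; rewrite mxE.
by apply: eq_bigr => b _; rewrite mxE.
Qed.

Lemma L1_qf m (S : 'M[R]_m) (V : T -> 'cV[R]_m) : good V ->
  (fun w => qf S (V w)) \in L1.
Proof.
move=> g; apply: (L1_ext (fun w => \sum_(a <- index_enum 'I_m) \sum_(b <- index_enum 'I_m) S a b * (V w a 0 * V w b 0))).
  by move=> w; rewrite qfE.
apply: L1_sum => a; apply: L1_sum => b; apply: L1Z; exact: cross_L1.
Qed.

Lemma Ex_qf m (S : 'M[R]_m) (V : T -> 'cV[R]_m) : good V ->
  Ex (fun w => qf S (V w)) = tf S (cross V V).
Proof.
move=> g; rewrite tfE.
rewrite (Ex_ext _ (fun w => \sum_(a <- index_enum 'I_m) \sum_(b <- index_enum 'I_m) S a b * (V w a 0 * V w b 0))); last by move=> w; rewrite qfE.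
rewrite Ex_sum; last by move=> a; apply: L1_sum => b; apply: L1Z; exact: cross_L1.
apply: eq_bigr => a _; rewrite Ex_sum; last by move=> b; apply: L1Z; exact: cross_L1.
apply: eq_bigr => b _; rewrite ExZ ?mxE //; exact: cross_L1.
Qed.

End Vec.
Section AffQ.
Context (R : realType) d (T : measurableType d) (Pr : probability T R).

Lemma tfD m (S M1 M2 : 'M[R]_m) : tf (S) (M1 + M2) = tf S M1 + tf S M2.
Proof. by rewrite /tf linearD /= mulmxDr mxtraceD. Qed.

Lemma tf_qf m (S : 'M[R]_m) (c : 'cV[R]_m) : tf S (c *m c^T) = qf S c.
Proof.
rewrite /tf /qf trmx_mul trmxK mulmxA mxtrace_mulC mulmxA.
by rewrite /mxtrace big_ord1.
Qed.

Lemma tfM m n (S : 'M[R]_m) (L : 'M[R]_(m, n)) (M : 'M[R]_n) :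
  tf S (L *m M *m L^T) = tf (L^T *m S *m L) M.
Proof.
rewrite /tf !trmx_mul trmxK !mulmxA mxtrace_mulC !mulmxA.
done.
Qed.

Lemma Ex_qf_aff m n (S : 'M[R]_m) (c : 'cV[R]_m) (L : 'M[R]_(m, n)) (Z : T -> 'cV[R]_n) :
  good Pr Z -> mean Pr Z = 0 ->
  Ex Pr (fun w => qf S (c + L *m Z w)) = qf S c + tf S (L *m cross Pr Z Z *m L^T).
Proof.
move=> gZ mZ.
have gc := good_cst Pr c.
have gL := goodM L gZ.
rewrite Ex_qf; last exact: goodD.
rewrite (crossDl (V1 := fun _ => c) (V2 := fun w => L *m Z w)) //.
rewrite (crossDr (V2 := fun _ => c) (V3 := fun w => L *m Z w)) //.
rewrite (crossDr (V2 := fun _ => c) (V3 := fun w => L *m Z w)) //.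
have E1 : cross Pr (fun=> c) (fun=> c) = c *m c^T by rewrite cross_cstl // mean_cst.
have E2 : cross Pr (fun=> c) (fun w => L *m Z w) = 0 by rewrite cross_cstl // meanM // mZ mulmx0 trmx0 mulmx0.
have E3 : cross Pr (fun w => L *m Z w) (fun=> c) = 0 by rewrite cross_cstr // meanM // mZ mulmx0 mul0mx.
rewrite E1 E2 E3 addr0 add0r.
rewrite crossMl // crossMr // tfD tf_qf mulmxA //.
exact: goodD.
Qed.
End AffQ.

Section Noise.
Context (R : realType) d (T : measurableType d) (Pr : probability T R).
Context (nx : nat) (W : nat -> T -> 'cV[R]_nx) (Sigma : 'M[R]_nx) (Phi : 'M[R]_nx).
Hypothesis HW2 : forall j, good Pr (W j).
Hypothesis HW0 : forall j, mean Pr (W j) = 0.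
Hypothesis HWS : forall j, cross Pr (W j) (W j) = Sigma.
Hypothesis HWI : forall j l, j != l -> cross Pr (W j) (W l) = 0.

Fixpoint Zn (k : nat) (i : nat) (w : T) : 'cV[R]_nx :=
  match i with
  | 0 => 0
  | i'.+1 => Phi *m Zn k i' w + W (k + i') w
  end.

Fixpoint Mseq (i : nat) : 'M[R]_nx :=
  match i with
  | 0 => 0
  | i'.+1 => Phi *m Mseq i' *m Phi^T + Sigma
  end.

Lemma good_Zn k i : good Pr (Zn k i).
Proof.
elim: i => [|i IH] /=; first exact: (good_cst Pr 0).
by apply: goodD => //; apply: goodM.
Qed.

Lemma mean_Zn k i : mean Pr (Zn k i) = 0.
Proof.
elim: i => [|i IH] /=; first exact: (mean_cst Pr 0).
rewrite (meanD (V1 := fun w => Phi *m Zn k i w)) //; last exact: goodM (good_Zn k i).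
by rewrite meanM ?IH ?HW0 ?mulmx0 ?addr0 //; exact: good_Zn.
Qed.

Lemma cross_ZnW k i m : (k + i <= m)%N -> cross Pr (Zn k i) (W m) = 0.
Proof.
elim: i => [|i IH] /= Hm.
  by rewrite cross_cstl ?mul0mx.
rewrite (crossDl (V1 := fun w => Phi *m Zn k i w)) //; last exact: goodM (good_Zn k i).
rewrite crossMl ?IH ?mulmx0 ?add0r; try exact: good_Zn.
- by apply: HWI; rewrite neq_ltn -addnS Hm.
- by rewrite (leq_trans _ Hm) // leq_add2l.
- exact: HW2.
Qed.

Lemma cross_Zn k i : cross Pr (Zn k i) (Zn k i) = Mseq i.
Proof.
elim: i => [|i IH] /=.
  by rewrite cross_cstl ?mul0mx //; exact: good_cst.
have gZ := good_Zn k i; have gPZ := goodM Phi gZ.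
rewrite (crossDl (V1 := fun w => Phi *m Zn k i w)) //; last by apply: goodD.
rewrite (crossDr (V2 := fun w => Phi *m Zn k i w)) //.
rewrite (crossDr (V2 := fun w => Phi *m Zn k i w)) //.
rewrite crossMl // crossMr // crossMr // crossMl // IH HWS.
rewrite cross_ZnW // (crossC Pr (Zn k i)) cross_ZnW //.
by rewrite trmx0 mul0mx mulmx0 addr0 add0r mulmxA.
Qed.

Lemma Mseq_shift i : Mseq i.+1 = Phi ^+ i *m Sigma *m (Phi ^+ i)^T + Mseq i.
Proof.
elim: i => [|i IH]; first by rewrite /= mulmx0 mul0mx add0r expr0 mul1mx trmx1 mulmx1 addr0.
have -> : Mseq i.+2 = Phi *m Mseq i.+1 *m Phi^T + Sigma by [].
rewrite {1}IH mulmxDr mulmxDl -addrA; congr (_ + _).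
by rewrite exprS -mulmxE trmx_mul !mulmxA.
Qed.

End Noise.
Section Cost.
Context (R : realType) d (T : measurableType d) (Pr : probability T R).
Context (nx nu : nat) (A : 'M[R]_nx) (B : 'M[R]_(nx, nu)) (K : 'M[R]_(nu, nx)).
Context (Q P : 'M[R]_nx) (Rw : 'M[R]_nu) (N : nat) (W : nat -> T -> 'cV[R]_nx) (Sigma : 'M[R]_nx).
Hypothesis HW2 : forall j, good Pr (W j).
Hypothesis HW0 : forall j, mean Pr (W j) = 0.
Hypothesis HWS : forall j, cross Pr (W j) (W j) = Sigma.
Hypothesis HWI : forall j l, j != l -> cross Pr (W j) (W l) = 0.
Local Notation Phi := (A + B *m K).
Local Notation Ms := (Mseq Sigma Phi).

Lemma epredE k e0 w i : epred A B K W k e0 w i = Phi ^+ i *m e0 + Zn W Phi k i w.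
Proof.
elim: i => [|i IH] /=; first by rewrite expr0 mul1mx addr0.
by rewrite IH mulmxDr addrA exprS -mulmxE mulmxA.
Qed.

Lemma Ex_qf_aff1 m (S : 'M[R]_m) (c : 'cV[R]_m) (Z : T -> 'cV[R]_m) :
  good Pr Z -> mean Pr Z = 0 ->
  Ex Pr (fun w => qf S (c + Z w)) = qf S c + tf S (cross Pr Z Z).
Proof.
move=> gZ mZ.
rewrite (Ex_ext _ (fun w => qf S (c + 1%:M *m Z w))); last by move=> w; rewrite mul1mx.
by rewrite Ex_qf_aff // mul1mx trmx1 mulmx1.
Qed.

Definition Jval (e0 z : 'cV[R]_nx) (v : nat -> 'cV[R]_nu) : R :=
  qf P (znom A B z v N + Phi ^+ N *m e0) + tf P (Ms N) +
  \sum_(i < N) (qf Q (znom A B z v i + Phi ^+ i *m e0) + tf Q (Ms i) +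
               (qf Rw (K *m (Phi ^+ i *m e0) + v i) + tf Rw (K *m Ms i *m K^T))).

Lemma sample_costE k x z v :
  sample_cost A B K Q P Rw N W k x z v =1
  (fun w => qf P ((znom A B z v N + Phi ^+ N *m (x - z)) + Zn W Phi k N w) +
     \sum_(i <- index_enum 'I_N)
       (qf Q ((znom A B z v i + Phi ^+ i *m (x - z)) + Zn W Phi k i w) +
        qf Rw ((K *m (Phi ^+ i *m (x - z)) + v i) + K *m Zn W Phi k i w))).
Proof.
move=> w; rewrite /sample_cost /= !epredE addrA; congr (_ + _).
apply: eq_bigr => i _; rewrite !epredE addrA; congr (_ + qf _ _).
by rewrite mulmxDr addrAC.
Qed.

Lemma sample_cost_L1 k x z v :
  sample_cost A B K Q P Rw N W k x z v \in Lfun Pr 1.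
Proof.
have gZ := good_Zn Phi HW2 k.
apply: (L1_ext _ _ (fun w => esym (sample_costE k x z v w))).
apply: L1D; first by apply: L1_qf; apply: goodD => //; exact: good_cst.
apply: L1_sum => i; apply: L1D; apply: L1_qf; apply: goodD; try exact: good_cst => //.
- exact: gZ.
- exact: goodM.
Qed.

Lemma Ex_sample k x z v :
  Ex Pr (sample_cost A B K Q P Rw N W k x z v) = Jval (x - z) z v.
Proof.
have gZ := good_Zn Phi HW2 k.
have mZ := mean_Zn Phi HW2 HW0 k.
have cZ := cross_Zn Phi HW2 HWS HWI k.
rewrite (Ex_ext _ _ (sample_costE k x z v)).
rewrite ExD; last first.
- apply: L1_sum => i; apply: L1D; apply: L1_qf; apply: goodD; try exact: good_cst.
    exact: gZ.
  exact: goodM.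
- by apply: L1_qf; apply: goodD => //; exact: good_cst.
rewrite Ex_qf_aff1 // cZ Ex_sum; last first.
  move=> i; apply: L1D; apply: L1_qf; apply: goodD; try exact: good_cst.
    exact: gZ.
  exact: goodM.
rewrite /Jval; congr (_ + _); apply: eq_bigr => i _.
rewrite ExD; last 2 first.
- by apply: L1_qf; apply: goodD => //; exact: good_cst.
- by apply: L1_qf; apply: goodD; [exact: good_cst | exact: goodM].
rewrite Ex_qf_aff1 // cZ Ex_qf_aff // cZ //.
Qed.

Lemma Jcost_eq k x z v :
  Jcost A B K Q P Rw N W Pr k x z v = (Jval (x - z) z v)%:E.
Proof.
rewrite /Jcost -(Ex_sample k x z v) -EEx; last exact: sample_cost_L1.
by rewrite unlock.
Qed.

End Cost.
Section Next.
Context (R : realType) d (T : measurableType d) (Pr : probability T R).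
Context (nx nu : nat) (A : 'M[R]_nx) (B : 'M[R]_(nx, nu)) (K : 'M[R]_(nu, nx)).
Context (Q P : 'M[R]_nx) (Rw : 'M[R]_nu) (N : nat) (W : nat -> T -> 'cV[R]_nx) (Sigma : 'M[R]_nx).
Hypothesis HW2 : forall j, good Pr (W j).
Hypothesis HW0 : forall j, mean Pr (W j) = 0.
Hypothesis HWS : forall j, cross Pr (W j) (W j) = Sigma.
Local Notation Phi := (A + B *m K).
Local Notation Jv := (Jval A B K Q P Rw N Sigma).

Ltac solveL1 :=
  repeat first [apply: L1cst | apply: L1D | apply: L1_sum => ? | apply: L1_qf];
  repeat first [exact: HW2 | exact: good_cst | apply: goodD | apply: goodM].

Lemma Ex_Jval k e z v :
  Ex Pr (fun w => Jv (e + W k w) z v) =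
  Jv e z v + tf P (Phi ^+ N *m Sigma *m (Phi ^+ N)^T) +
  \sum_(i < N) (tf Q (Phi ^+ i *m Sigma *m (Phi ^+ i)^T) +
                tf Rw ((K *m Phi ^+ i) *m Sigma *m (K *m Phi ^+ i)^T)).
Proof.
rewrite /Jval.
rewrite ExD; [|solveL1|solveL1].
rewrite ExD; [|solveL1|solveL1].
rewrite Ex_cst Ex_sum; last by move=> i; solveL1.
rewrite (Ex_ext _ (fun w => qf P ((znom A B z v N + Phi ^+ N *m e) + Phi ^+ N *m W k w))); last first.
  by move=> w; rewrite mulmxDr addrA.
rewrite Ex_qf_aff // HWS.
rewrite -!addrA; congr (_ + _); rewrite addrCA; congr (_ + _).
rewrite addrCA; congr (_ + _); rewrite -big_split /=; apply: eq_bigr => i _.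
rewrite ExD; [|solveL1|solveL1].
rewrite ExD; [|solveL1|solveL1].
rewrite ExD; [|solveL1|solveL1].
rewrite !Ex_cst.
rewrite (Ex_ext _ (fun w => qf Q ((znom A B z v i + Phi ^+ i *m e) + Phi ^+ i *m W k w))); last first.
  by move=> w; rewrite mulmxDr addrA.
rewrite Ex_qf_aff // HWS.
rewrite (Ex_ext _ (fun w => qf Rw ((K *m (Phi ^+ i *m e) + v i) + (K *m Phi ^+ i) *m W k w))); last first.
  by move=> w; rewrite !mulmxDr addrAC !mulmxA.
rewrite Ex_qf_aff // HWS.
lra.
Qed.
Lemma Jval_L1 k e z v : (fun w => Jv (e + W k w) z v) \in Lfun Pr 1.
Proof. rewrite /Jval; solveL1. Qed.
End Next.
Section Wfacts.
Context (R : realType) d (T : measurableType d) (Pr : probability T R).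

Lemma L2_of_sq (f : T -> R) : measurable_fun setT f ->
  Pr.-integrable setT (fun w => ((f w) ^+ 2)%:E) -> f \in Lfun Pr 2%:E.
Proof.
move=> mf /integrableP [_ If].
rewrite inE; apply/andP; split; first by rewrite inE.
rewrite !inE /= /finite_norm unlock /Lnorm.
apply: poweR_lty.
apply: le_lt_trans If; apply: ge0_le_integral => //.
- by move=> x _; rewrite lee_fin powR_ge0.
- apply/measurable_EFinP; apply: (@measurableT_comp _ _ _ _ _ _ (fun x : R => x `^ 2)) => //.
  exact: measurableT_comp.
- apply: measurableT_comp => //; apply/measurable_EFinP; exact: measurable_funX.
- by move=> x _; rewrite lee_fin powR_mulrn ?normr_ge0 // normrX.
Qed.

Context (nx : nat) (W : nat -> T -> 'cV[R]_nx) (Sigma : 'M[R]_nx).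
Hypothesis rvW : forall k, rand_vec (W k).
Hypothesis indW : mutually_independent Pr W.
Hypothesis covW : mean0_cov Pr W Sigma.

Lemma HW2 j : good Pr (W j).
Proof.
move=> a; apply: L2_of_sq; first exact: rvW.
by have [/(_ a) [_ [H _]] _] := covW j.
Qed.

Lemma HW0 j : mean Pr (W j) = 0.
Proof.
apply/matrixP => a b; rewrite !mxE /Ex unlock.
by have [/(_ a) [_ [_ ->]] _] := covW j.
Qed.

Lemma HWS j : cross Pr (W j) (W j) = Sigma.
Proof.
apply/matrixP => a b; rewrite !mxE /Ex unlock.
by have [_ ->] := covW j.
Qed.

Lemma HWI j l : j != l -> cross Pr (W j) (W l) = 0.
Proof.
move=> jl; apply/matrixP => a b; rewrite !mxE.
have X2 := HW2 j a; have Y2 := HW2 l b.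
rewrite /Ex (@indep_mul0 _ _ _ Pr (fun w => W j w a 0) (fun w => W l w b 0)) //.
- exact: rvW.
- exact: rvW.
- exact: L2M.
- exact: L2_L1.
- have := HW0 l; move/matrixP/(_ b 0); rewrite !mxE => H.
  by rewrite (EEx (L2_L1 Y2)) H.
- move=> B1 B2 mB1 mB2.
  pose S := fun n : nat => if n == j then (fun w => W j w a 0) @^-1` B1 else (fun w => W l w b 0) @^-1` B2.
  have lj : (l == j) = false by rewrite eq_sym (negbTE jl).
  have := @indW [:: j; l] S.
  rewrite /= inE jl !big_cons !big_nil /S eqxx lj setIT mule1.
  apply => //.
  move=> i; rewrite !inE => /orP [/eqP -> | /eqP ->]; rewrite /S ?eqxx ?lj.
    by apply: sub_gen_smallest; exists a, B1; split.
  by apply: sub_gen_smallest; exists b, B2; split.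
Qed.
End Wfacts.
Section Alg.
Context (R : realType) (nx nu : nat) (A : 'M[R]_nx) (B : 'M[R]_(nx, nu)) (K : 'M[R]_(nu, nx)).
Context (Q P : 'M[R]_nx) (Rw : 'M[R]_nu) (N : nat) (Sigma : 'M[R]_nx).
Local Notation Phi := (A + B *m K).
Local Notation Ms := (Mseq Sigma Phi).
Hypothesis HL : Phi^T *m P *m Phi - P = - (Q + K^T *m Rw *m K).

Let HL' : Phi^T *m P *m Phi = P - Q - K^T *m Rw *m K.
Proof. by move/eqP: HL; rewrite subr_eq => /eqP ->; rewrite opprD addrC addrA. Qed.

Lemma qf_lyap y : qf P (Phi *m y) = qf P y - qf Q y - qf Rw (K *m y).
Proof.
rewrite /qf trmx_mul -!mulmxA [Phi^T *m (P *m _)]mulmxA [Phi^T *m P *m _]mulmxA HL'.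
have H : forall M1 M2 M3 : 'M[R]_1, (M1 - M2 - M3) 0 0 = M1 0 0 - M2 0 0 - M3 0 0.
  by move=> *; rewrite !mxE.
by rewrite !mulmxBl !mulmxBr H trmx_mul !mulmxA.
Qed.

Lemma tfBl m (S1 S2 M : 'M[R]_m) : tf (S1 - S2) M = tf S1 M - tf S2 M.
Proof. by rewrite /tf mulmxBl raddfB. Qed.

Lemma tf_lyap M : tf P (Phi *m M *m Phi^T) = tf P M - tf Q M - tf Rw (K *m M *m K^T).
Proof. by rewrite !tfM HL' !tfBl. Qed.

Lemma tf0 m (S : 'M[R]_m) : tf S 0 = 0.
Proof. by rewrite /tf trmx0 mulmx0 mxtrace0. Qed.

End Alg.
Section Final.
Context (R : realType) (nx nu : nat) (A : 'M[R]_nx) (B : 'M[R]_(nx, nu)) (K : 'M[R]_(nu, nx)).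
Context (Q P : 'M[R]_nx) (Rw : 'M[R]_nu) (N : nat) (Sigma : 'M[R]_nx).
Local Notation Phi := (A + B *m K).
Local Notation Ms := (Mseq Sigma Phi).
Hypothesis HL : Phi^T *m P *m Phi - P = - (Q + K^T *m Rw *m K).
Hypothesis N0 : (0 < N)%N.
Hypothesis Hsym : Sigma^T = Sigma.

Definition vshift (z : 'cV[R]_nx) (v : nat -> 'cV[R]_nu) (i : nat) : 'cV[R]_nu :=
  if (i.+1 < N)%N then v i.+1 else K *m znom A B z v N.

Lemma znom_shift z v i : (i < N)%N ->
  znom A B (znom A B z v 1) (vshift z v) i = znom A B z v i.+1.
Proof.
elim: i => [|i IH] Hi //=.
rewrite IH ?(ltn_trans (ltnSn i) Hi) // /vshift Hi.
done.
Qed.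

Lemma znom_shiftN z v :
  znom A B (znom A B z v 1) (vshift z v) N = Phi *m znom A B z v N.
Proof.
move: N0 (znom_shift z v) ; rewrite /vshift.
case: N => [|N'] // _ Hs.
rewrite [LHS]/= Hs // ltnn mulmxDl mulmxA.
done.
Qed.

Lemma sum_first n (F : nat -> R) : (0 < n)%N ->
  \sum_(i < n) F i = F 0%N + \sum_(i < n.-1) F i.+1.
Proof. by case: n => // n _; rewrite big_ord_recl. Qed.

Lemma sum_last n (F : nat -> R) : (0 < n)%N ->
  \sum_(i < n) F i = \sum_(i < n.-1) F i + F n.-1.
Proof. by case: n => // n _; rewrite big_ord_recr. Qed.

Lemma pow_shift i (e : 'cV[R]_nx) : Phi ^+ i *m (Phi *m e) = Phi ^+ i.+1 *m e.
Proof. by rewrite mulmxA mulmxE -exprSr. Qed.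

Lemma tf_shiftQ (S : 'M[R]_nx) i : tf S (Ms i.+1) = tf S (Phi ^+ i *m Sigma *m (Phi ^+ i)^T) + tf S (Ms i).
Proof. by rewrite Mseq_shift tfD. Qed.

Lemma tf_shiftR i : tf Rw (K *m Ms i.+1 *m K^T) =
  tf Rw ((K *m Phi ^+ i) *m Sigma *m (K *m Phi ^+ i)^T) + tf Rw (K *m Ms i *m K^T).
Proof. by rewrite Mseq_shift mulmxDr mulmxDl tfD trmx_mul !mulmxA. Qed.

Let fs e z v i := qf Q (znom A B z v i + Phi ^+ i *m e) + tf Q (Ms i) +
  (qf Rw (K *m (Phi ^+ i *m e) + v i) + tf Rw (K *m Ms i *m K^T)).

Lemma final_identity z v e :
  Jval A B K Q P Rw N Sigma (Phi *m e) (znom A B z v 1) (vshift z v) +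
  tf P (Phi ^+ N *m Sigma *m (Phi ^+ N)^T) +
  \sum_(i < N) (tf Q (Phi ^+ i *m Sigma *m (Phi ^+ i)^T) +
                tf Rw ((K *m Phi ^+ i) *m Sigma *m (K *m Phi ^+ i)^T)) -
  Jval A B K Q P Rw N Sigma e z v =
  - qf Q (z + e) - qf Rw (K *m e + v 0%N) + \tr (P *m Sigma).
Proof.
set DN := znom A B z v N + Phi ^+ N *m e.
have J0 : Jval A B K Q P Rw N Sigma e z v = qf P DN + tf P (Ms N) + \sum_(i < N) fs e z v i by [].
have J1 : Jval A B K Q P Rw N Sigma (Phi *m e) (znom A B z v 1) (vshift z v) =
   qf P (Phi *m DN) + tf P (Ms N) +
   \sum_(i < N) (qf Q (znom A B (znom A B z v 1) (vshift z v) i + Phi ^+ i *m (Phi *m e)) + tf Q (Ms i) +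
     (qf Rw (K *m (Phi ^+ i *m (Phi *m e)) + vshift z v i) + tf Rw (K *m Ms i *m K^T))).
  rewrite /Jval znom_shiftN; congr (qf P _ + _ + _).
  rewrite /DN mulmxDr; congr (_ + _); rewrite !mulmxA; congr (_ *m _).
  by rewrite mulmxE -exprSr exprS.
set g := fun i : nat => qf Q (znom A B (znom A B z v 1) (vshift z v) i + Phi ^+ i *m (Phi *m e)) + tf Q (Ms i) +
     (qf Rw (K *m (Phi ^+ i *m (Phi *m e)) + vshift z v i) + tf Rw (K *m Ms i *m K^T)).
set h := fun i : nat => tf Q (Phi ^+ i *m Sigma *m (Phi ^+ i)^T) +
                tf Rw ((K *m Phi ^+ i) *m Sigma *m (K *m Phi ^+ i)^T).
have S1 : \sum_(i < N) g i + \sum_(i < N) h i = \sum_(i < N.-1) fs e z v i.+1 +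
   (qf Q DN + tf Q (Ms N) + (qf Rw (K *m DN) + tf Rw (K *m Ms N *m K^T))).
  rewrite -big_split /= (sum_last (fun i => g i + h i)) //; congr (_ + _).
    apply: eq_bigr => i _; have Hi : (i.+1 < N)%N by rewrite -ltn_predRL.
    rewrite /g /h /fs znom_shift ?(ltn_trans (ltnSn i) Hi) // /vshift Hi !pow_shift.
    rewrite (tf_shiftQ Q i) (tf_shiftR i).
    lra.
  have HN := prednK N0.
  rewrite /g /h znom_shift ?ltn_predL // /vshift HN ltnn !pow_shift HN.
  rewrite -[in RHS]HN (tf_shiftQ Q) tf_shiftR /DN mulmxDr [K *m (Phi ^+ N *m e) + _]addrC.
  lra.
have F2 := sum_first (fs e z v) N0.
have F3 : fs e z v 0 = qf Q (z + e) + qf Rw (K *m e + v 0%N).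
  by rewrite /fs /= expr0 !mul1mx mulmx0 mul0mx !tf0 !addr0.
have F4 := qf_lyap HL DN.
have F5 : tf P (Phi ^+ N *m Sigma *m (Phi ^+ N)^T) + tf P (Ms N) =
    tf P (Ms N) - tf Q (Ms N) - tf Rw (K *m Ms N *m K^T) + tf P Sigma.
  by rewrite -tf_shiftQ /= tfD (tf_lyap HL).
have F6 : \tr (P *m Sigma) = tf P Sigma by rewrite /tf Hsym.
rewrite J0 J1 F6.
rewrite /g /h in S1; cbv beta in S1.
lra.
Qed.
End Final.
Unset Implicit Arguments.

Theorem theorem3 (R : realType) (d : measure_display) (T : measurableType d)
  (Pr : probability T R)
  (nx nu : nat) (A : 'M[R]_nx) (B : 'M[R]_(nx, nu)) (K : 'M[R]_(nu, nx))
  (Q P : 'M[R]_nx) (Ru_w : 'M[R]_nu) (Sigma : 'M[R]_nx) (N : nat)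
  (X : set 'cV[R]_nx) (U : set 'cV[R]_nu)
  (Rx : nat -> set 'cV[R]_nx) (Ru : nat -> set 'cV[R]_nu)
  (Rf : set 'cV[R]_nx) (Zf : set 'cV[R]_nx)
  (W : nat -> T -> 'cV[R]_nx) :
  (* standing assumptions of the setting *)
  (0 < N)%N ->
  schur_stable (A + B *m K) ->
  convex_set X -> convex_set U ->
  (forall k, Rx k `<=` Rf) ->
  (forall k, Ru k `<=` mximg K Rf) ->
  Zf `<=` pdiff X Rf ->
  mximg (A + B *m K) Zf `<=` Zf ->
  mximg K Zf `<=` pdiff U (mximg K Rf) ->
  (* i.i.d. zero-mean disturbances with covariance Sigma *)
  (forall k, rand_vec (W k)) ->
  mutually_independent Pr W ->
  identically_distributed Pr W ->
  mean0_cov Pr W Sigma ->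
  (* quadratic costs *)
  psd Q -> pd Ru_w ->
  (A + B *m K)^T *m P *m (A + B *m K) - P = - (Q + K^T *m Ru_w *m K) ->
  (* one step of the closed loop from time k at (x(k), z(k)) = (x, z) *)
  forall (k : nat) (x z : 'cV[R]_nx) (vstar : nat -> 'cV[R]_nu),
    feasible A B N X U Rx Ru Zf k z vstar ->
    (forall v, feasible A B N X U Rx Ru Zf k z v ->
       (Jcost A B K Q P Ru_w N W Pr k x z vstar
          <= Jcost A B K Q P Ru_w N W Pr k x z v)%E) ->
    let u := K *m (x - z) + vstar 0%N in
    let znext := A *m z + B *m vstar 0%N in
    ((\int[Pr]_w (Jstar A B K Q P Ru_w N W Pr X U Rx Ru Zf k.+1
                    (A *m x + B *m u + W k w) znext))
       - Jstar A B K Q P Ru_w N W Pr X U Rx Ru Zf k x z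
     <= (- qf Q x - qf Ru_w u + \tr (P *m Sigma))%:E)%E.
Proof.
move=> N0 _ _ _ HRx HRu HZfX HZfinv HKZf rvW indW _ covW _ _ HL k x z vstar Hfeas Hopt.
rewrite /is_true; cbv zeta; change (is_true ((\int[Pr]_w (Jstar A B K Q P Ru_w N W Pr X U Rx Ru Zf k.+1 (A *m x + B *m (K *m (x - z) + vstar 0%N) + W k w) (A *m z + B *m vstar 0%N))) - Jstar A B K Q P Ru_w N W Pr X U Rx Ru Zf k x z <= (- qf Q x - qf Ru_w (K *m (x - z) + vstar 0%N) + \tr (P *m Sigma))%:E)%E).
have W2 := HW2 rvW covW.
have W0 := HW0 covW.
have WS := HWS covW.
have WI := HWI rvW indW covW.
have Hsym : Sigma^T = Sigma by rewrite -(WS 0%N) -crossC.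
set Phi := A + B *m K.
set vs := vshift A B K N z vstar.
have Jk : Jstar A B K Q P Ru_w N W Pr X U Rx Ru Zf k x z = Jcost A B K Q P Ru_w N W Pr k x z vstar.
  apply/eqP; rewrite eq_le; apply/andP; split.
  - by apply: ereal_inf_lbound; exists vstar.
  - by apply: le_ereal_inf_tmp => _ [v Hv <-]; exact: Hopt.
have Jk2 : Jstar A B K Q P Ru_w N W Pr X U Rx Ru Zf k x z = (Jval A B K Q P Ru_w N Sigma (x - z) z vstar)%:E.
  by rewrite Jk (Jcost_eq A B K Q P Ru_w N W2 W0 WS WI).
have zN := Hfeas.2.
have Hfs : feasible A B N X U Rx Ru Zf k.+1 (A *m z + B *m vstar 0%N) vs.
  split.
  - move=> i Hi.
    case: (ltnP i.+1 N) => Hi1.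
    + have [H1 H2] := Hfeas.1 i.+1 Hi1.
      rewrite (znom_shift A B K z vstar Hi) /vs /vshift Hi1 addnS -addSn.
      by split.
    + have HiN : i.+1 = N by apply/eqP; rewrite eqn_leq Hi Hi1.
      rewrite (znom_shift A B K z vstar Hi) /vs /vshift HiN ltnn.
      have [HX1 HX2] := HZfX _ zN.
      have [HU1 HU2] := HKZf (K *m znom A B z vstar N) (ex_intro2 _ _ _ zN erefl).
      split; split => // b Hb.
      * by apply: HX2; apply: HRx Hb.
      * by apply: HU2; apply: HRu Hb.
  - rewrite (znom_shiftN A B K N0 z vstar); apply: HZfinv.
    by exists (znom A B z vstar N).
have grp : forall m n (a b c e dd ww : 'M[R]_(m, n)), a + (c - e + dd) + ww - (b + dd) = a - b + (c - e) + ww.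
  by move=> m n a b c e dd ww; apply/matrixP => i j; rewrite !mxE; lra.
have Ex' : forall w, A *m x + B *m (K *m (x - z) + vstar 0%N) + W k w - (A *m z + B *m vstar 0%N) = Phi *m (x - z) + W k w.
  move=> w; rewrite /Phi mulmxDl mulmxDr mulmxA !mulmxBr.
  exact: grp.
have Hle : forall w, (Jstar A B K Q P Ru_w N W Pr X U Rx Ru Zf k.+1
        (A *m x + B *m (K *m (x - z) + vstar 0%N) + W k w)
        (A *m z + B *m vstar 0%N) <= (Jval A B K Q P Ru_w N Sigma (Phi *m (x - z) + W k w) (A *m z + B *m vstar 0%N) vs)%:E)%E.
  move=> w0; apply: ge_ereal_inf.
  exists (Jcost A B K Q P Ru_w N W Pr k.+1 (A *m x + B *m (K *m (x - z) + vstar 0%N) + W k w0) (A *m z + B *m vstar 0%N) vs).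
    by exists vs.
  by rewrite (Jcost_eq A B K Q P Ru_w N W2 W0 WS WI) (Ex' w0).
have HI := le_trans (integral_le_any Pr Hle) (lexx _).
have HE : (\int[Pr]_w (Jval A B K Q P Ru_w N Sigma (Phi *m (x - z) + W k w) (A *m z + B *m vstar 0%N) vs)%:E)%E =
    (Ex Pr (fun w => Jval A B K Q P Ru_w N Sigma (Phi *m (x - z) + W k w) (A *m z + B *m vstar 0%N) vs))%:E.
  by rewrite -EEx ?(Jval_L1 A B K Q P Ru_w N Sigma W2) // unlock.
rewrite HE (Ex_Jval A B K Q P Ru_w N W2 W0 WS) in HI.
rewrite Jk2; apply: le_trans (leeB HI (lexx _)) _; rewrite -EFinB lee_fin.
have := final_identity HL N0 Hsym z vstar (x - z).
rewrite [z + (x - z)]addrC subrK => <-.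
exact: lexx.
Qed.
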